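(* Let $H_1,H_2$ be separable Hilbert spaces, $K\in B(H_1)$, $L\in B(H_2)$, and let $\{x_n\oplus y_n\}_{n\geqslant1}$ be a $K\oplus L$-frame for $H_1\oplus H_2$. If $\{a_n\oplus b_n\}_{n\geqslant1}$ is a $K\oplus L$-dual frame to $\{x_n\oplus y_n\}_{n\geqslant1}$, then $\{a_n\}_{n\geqslant1}$ is a $K$-dual frame to $\{x_n\}_{n\geqslant1}$ and $\{b_n\}_{n\geqslant1}$ is an $L$-dual frame to $\{y_n\}_{n\geqslant1}$.
   Context: $H_1\oplus H_2$ is the Hilbert space of pairs $x\oplus y$ with inner product $\langle x\oplus y,a\oplus b\rangle=\langle x,a\rangle+\langle y,b\rangle$; $(K\oplus L)(x\oplus y)=K(x)\oplus L(y)$. For a Hilbert space $H$ and $K\in B(H)$, $\{z_n\}_{n\geqslant1}$ is a $K$-frame if there are $A,B>0$ with $A\|K^*z\|^2\leq\sum_n|\langle z,z_n\rangle|^2\leq B\|z\|^2$ for all $z\in H$. A $K$-dual frame to a $K$-frame $\{z_n\}$ is a Bessel sequence $\{f_n\}_{n\geqslant1}$ in $H$ such that $Kz=\sum_{n=1}^\infty\langle z,f_n\rangle z_n$ for all $z\in H$. *)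

(* Defs.v *)
From HB Require Import structures.
From mathcomp Require Import all_boot all_order all_algebra.
From mathcomp Require Import complex.
From mathcomp Require Import all_classical all_reals all_analysis.
Set Implicit Arguments.
Unset Strict Implicit.
Unset Printing Implicit Defensive.
Import Order.TTheory GRing.Theory Num.Theory.
Import numFieldNormedType.Exports.
Local Open Scope classical_set_scope.
Local Open Scope ring_scope.

Definition inner_product (R : realType) (V : lmodType R[i])
  (ip : V -> V -> R[i]) : Prop :=
  [/\ (forall (a : R[i]) (x y z : V), ip (a *: x + y) z = a * ip x z + ip y z),
      (forall x y : V, ip x y = Num.conj (ip y x)),
      (forall x : V, 0 <= ip x x) &
      (forall x : V, ip x x = 0 -> x = 0)].

Definition hnorm (R : realType) (V : lmodType R[i]) (ip : V -> V -> R[i])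
  (x : V) : R := Num.sqrt (complex.Re (ip x x)).

Definition hilbert (R : realType) (V : lmodType R[i]) (ip : V -> V -> R[i])
  : Prop :=
  inner_product ip /\
  forall u : nat -> V,
    (forall e : R, 0 < e -> exists N : nat, forall m n : nat,
        (N <= m)%N -> (N <= n)%N -> hnorm ip (u m - u n) < e) ->
    exists l : V, (fun n => hnorm ip (u n - l)) @ \oo --> (0 : R).

Definition separable (R : realType) (V : lmodType R[i]) (ip : V -> V -> R[i])
  : Prop :=
  exists d : nat -> V, forall (x : V) (e : R), 0 < e ->
    exists n : nat, hnorm ip (x - d n) < e.

Definition bounded_op (R : realType) (V : lmodType R[i]) (ip : V -> V -> R[i])
  (K : V -> V) : Prop :=
  (forall (a : R[i]) (u v : V), K (a *: u + v) = a *: K u + K v) /\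
  exists M : R, forall x : V, hnorm ip (K x) <= M * hnorm ip x.

Definition is_adjoint (R : realType) (V : lmodType R[i]) (ip : V -> V -> R[i])
  (K Ks : V -> V) : Prop :=
  forall x y : V, ip (K x) y = ip x (Ks y).

Definition coef_sum (R : realType) (V : lmodType R[i]) (ip : V -> V -> R[i])
  (z : V) (zs : nat -> V) : \bar R :=
  (\sum_(1 <= n <oo) ((Normc.normc (ip z (zs n)) ^+ 2)%:E))%E.

Definition Kframe (R : realType) (V : lmodType R[i]) (ip : V -> V -> R[i])
  (K : V -> V) (zs : nat -> V) : Prop :=
  exists Ks : V -> V, is_adjoint ip K Ks /\
  exists A B : R, 0 < A /\ 0 < B /\
    forall z : V,
      ((A * hnorm ip (Ks z) ^+ 2)%:E <= coef_sum ip z zs)%E /\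
      (coef_sum ip z zs <= (B * hnorm ip z ^+ 2)%:E)%E.

Definition bessel (R : realType) (V : lmodType R[i]) (ip : V -> V -> R[i])
  (fs : nat -> V) : Prop :=
  exists B : R, 0 < B /\
    forall z : V, (coef_sum ip z fs <= (B * hnorm ip z ^+ 2)%:E)%E.

Definition Kdual (R : realType) (V : lmodType R[i]) (ip : V -> V -> R[i])
  (K : V -> V) (zs fs : nat -> V) : Prop :=
  bessel ip fs /\
  forall z : V,
    (fun N : nat => hnorm ip (K z - \sum_(1 <= n < N) ip z (fs n) *: zs n))
      @ \oo --> (0 : R).

Definition dsum_ip (R : realType) (V1 V2 : lmodType R[i])
  (ip1 : V1 -> V1 -> R[i]) (ip2 : V2 -> V2 -> R[i]) (p q : V1 * V2) : R[i] :=
  ip1 p.1 q.1 + ip2 p.2 q.2.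

Definition dsum_op (V1 V2 : Type) (K : V1 -> V1) (L : V2 -> V2)
  (p : V1 * V2) : V1 * V2 := (K p.1, L p.2).

(* Main.v *)
Require Import Defs.
From HB Require Import structures.
From mathcomp Require Import all_boot all_order all_algebra.
From mathcomp Require Import complex.
From mathcomp Require Import all_classical all_reals all_analysis.
Local Open Scope ring_scope.
Import Order.TTheory GRing.Theory Num.Theory.
Import numFieldNormedType.Exports.

Section Gen.
Variables (R : realType) (H1 V : lmodType R[i]).
Variables (ip1 : H1 -> H1 -> R[i]) (ip : V -> V -> R[i]).
Variables (K : H1 -> H1) (Op : V -> V) (inj : H1 -> V) (p : V -> H1).
Hypothesis C1 : forall u w, ip (inj u) w = ip1 u (p w).
Hypothesis C2 : forall v z, ip v (inj z) = ip1 (p v) z.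
Hypothesis C3 : forall u, p (Op (inj u)) = K u.
Hypothesis C4a : forall v w, p (v + w) = p v + p w.
Hypothesis C4b : forall (c : R[i]) v, p (c *: v) = c *: p v.
Hypothesis C5 : forall w, hnorm ip1 (p w) <= hnorm ip w.
Hypothesis C6 : forall z, hnorm ip (inj z) = hnorm ip1 z.

Lemma hnorm_ge0 (W : lmodType R[i]) (q : W -> W -> R[i]) w : 0 <= hnorm q w.
Proof. exact: sqrtr_ge0. Qed.

Lemma coef_eq z zs : Defs.coef_sum ip (inj z) zs = Defs.coef_sum ip1 z (fun n => p (zs n)).
Proof. by rewrite /coef_sum; apply: eq_eseriesr => n _; rewrite C1. Qed.

Lemma p0 : p 0 = 0.
Proof. by have := C4a 0 0; rewrite addr0 => /eqP; rewrite -subr_eq subrr eq_sym => /eqP. Qed.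

Lemma pN v : p (- v) = - p v.
Proof. by apply/eqP; rewrite -addr_eq0 -C4a addrC subrr p0. Qed.

Lemma gen_frame zs : Kframe ip Op zs -> Kframe ip1 K (fun n => p (zs n)).
Proof.
move=> [Ks [hadj [A [B [A0 [B0 hAB]]]]]].
exists (fun z => p (Ks (inj z))); split.
  by move=> u z; rewrite -C1 -hadj C2 C3.
exists A, B; do 2 split => //.
move=> z; have [h1 h2] := hAB (inj z); split; rewrite -coef_eq.
  apply: le_trans h1; rewrite lee_fin; apply: ler_wpM2l; first exact: ltW.
  by rewrite lerXn2r ?nnegrE ?hnorm_ge0 //=; exact: C5.
by rewrite -C6.
Qed.

Lemma gen_dual zs fs : Kdual ip Op zs fs ->
  Kdual ip1 K (fun n => p (zs n)) (fun n => p (fs n)).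
Proof.
move=> [[B [B0 hB]] hc]; split.
  by exists B; split => // z; rewrite -coef_eq -C6.
move=> z; have := hc (inj z).
apply: squeeze_cvgr; last exact: cvg_cst.
near=> N; rewrite hnorm_ge0 /=.
have -> : K z - \sum_(1 <= n < N) ip1 z (p (fs n)) *: p (zs n) =
   p (Op (inj z) - \sum_(1 <= n < N) ip (inj z) (fs n) *: zs n).
  rewrite C4a pN C3 (big_morph p C4a p0); congr (_ - _); apply: eq_bigr => n _.
  by rewrite C4b C1.
exact: C5.
Unshelve. all: by end_near.
Qed.
End Gen.

Theorem proposition2p16 (R : realType) (H1 H2 : lmodType R[i])
  (ip1 : H1 -> H1 -> R[i]) (ip2 : H2 -> H2 -> R[i])
  (hH1 : hilbert ip1) (sH1 : separable ip1)
  (hH2 : hilbert ip2) (sH2 : separable ip2)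
  (K : H1 -> H1) (L : H2 -> H2)
  (hK : bounded_op ip1 K) (hL : bounded_op ip2 L)
  (x a : nat -> H1) (y b : nat -> H2) :
  Kframe (dsum_ip ip1 ip2) (dsum_op K L) (fun n => (x n, y n)) ->
  Kdual (dsum_ip ip1 ip2) (dsum_op K L) (fun n => (x n, y n))
        (fun n => (a n, b n)) ->
  (Kframe ip1 K x /\ Kdual ip1 K x a) /\ (Kframe ip2 L y /\ Kdual ip2 L y b).
Proof.
move=> hF hD.
have [[ip1l _ ip1p _] _] := hH1.
have [[ip2l _ ip2p _] _] := hH2.
have ip10 : forall w, ip1 0 w = 0.
  by move=> w; have := ip1l (-1) 0 0 w; rewrite scaleN1r oppr0 addr0 mulN1r addNr.
have ip20 : forall w, ip2 0 w = 0.
  by move=> w; have := ip2l (-1) 0 0 w; rewrite scaleN1r oppr0 addr0 mulN1r addNr.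
have ip1r0 : forall w, ip1 w 0 = 0.
  by move=> w; have [_ c _ _] := hH1.1; rewrite c ip10 conjC0.
have ip2r0 : forall w, ip2 w 0 = 0.
  by move=> w; have [_ c _ _] := hH2.1; rewrite c ip20 conjC0.
have L0 : L 0 = 0.
  by have [l _] := hL; have := l (-1) 0 0; rewrite scaleN1r oppr0 addr0 scaleN1r addNr.
have K0 : K 0 = 0.
  by have [l _] := hK; have := l (-1) 0 0; rewrite scaleN1r oppr0 addr0 scaleN1r addNr.
have Re1 : forall w, 0 <= complex.Re (ip1 w w).
  by move=> w; have := ip1p w; rewrite lecE => /andP[].
have Re2 : forall w, 0 <= complex.Re (ip2 w w).
  by move=> w; have := ip2p w; rewrite lecE => /andP[].
have A1 : forall u (w : H1 * H2), dsum_ip ip1 ip2 (u, 0) w = ip1 u w.1.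
  by move=> u w; rewrite /dsum_ip /= ip20 addr0.
have A2 : forall (v : H1 * H2) z, dsum_ip ip1 ip2 v (z, 0) = ip1 v.1 z.
  by move=> v z; rewrite /dsum_ip /= ip2r0 addr0.
have A5 : forall w : H1 * H2, hnorm ip1 w.1 <= hnorm (dsum_ip ip1 ip2) w.
  by move=> w; rewrite /hnorm /dsum_ip ler_wsqrtr // raddfD /= lerDl.
have A6 : forall z, hnorm (dsum_ip ip1 ip2) (z, 0) = hnorm ip1 z.
  by move=> z; rewrite /hnorm /dsum_ip /= ip20 addr0.
have B1 : forall u (w : H1 * H2), dsum_ip ip1 ip2 (0, u) w = ip2 u w.2.
  by move=> u w; rewrite /dsum_ip /= ip10 add0r.
have B2 : forall (v : H1 * H2) z, dsum_ip ip1 ip2 v (0, z) = ip2 v.2 z.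
  by move=> v z; rewrite /dsum_ip /= ip1r0 add0r.
have B5 : forall w : H1 * H2, hnorm ip2 w.2 <= hnorm (dsum_ip ip1 ip2) w.
  by move=> w; rewrite /hnorm /dsum_ip ler_wsqrtr // raddfD /= lerDr.
have B6 : forall z, hnorm (dsum_ip ip1 ip2) (0, z) = hnorm ip2 z.
  by move=> z; rewrite /hnorm /dsum_ip /= ip10 add0r.
have A3 : forall u, (dsum_op K L (u, 0)).1 = K u by [].
have B3 : forall u, (dsum_op K L (0, u)).2 = L u by [].
have A4a : forall v w : H1 * H2, (v + w).1 = v.1 + w.1 by [].
have A4b : forall (c : R[i]) (v : H1 * H2), (c *: v).1 = c *: v.1 by [].
have B4a : forall v w : H1 * H2, (v + w).2 = v.2 + w.2 by [].
have B4b : forall (c : R[i]) (v : H1 * H2), (c *: v).2 = c *: v.2 by [].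
split; split.
- exact: (@gen_frame R H1 _ ip1 (dsum_ip ip1 ip2) K (dsum_op K L) (fun u => (u, 0)) fst A1 A2 A3 A5 A6 (fun n => (x n, y n)) hF).
- exact: (@gen_dual R H1 _ ip1 (dsum_ip ip1 ip2) K (dsum_op K L) (fun u => (u, 0)) fst A1 A3 A4a A4b A5 A6 (fun n => (x n, y n)) (fun n => (a n, b n)) hD).
- exact: (@gen_frame R H2 _ ip2 (dsum_ip ip1 ip2) L (dsum_op K L) (fun u => (0, u)) snd B1 B2 B3 B5 B6 (fun n => (x n, y n)) hF).
- exact: (@gen_dual R H2 _ ip2 (dsum_ip ip1 ip2) L (dsum_op K L) (fun u => (0, u)) snd B1 B3 B4a B4b B5 B6 (fun n => (x n, y n)) (fun n => (a n, b n)) hD).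
Qed.
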